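(* Let $(X_1,Y_1),\dots,(X_{n+m},Y_{n+m})$ be exchangeable random elements of $\mathcal{X}\times\mathcal{Y}$ (indices $1,\dots,n$ calibration, $n+1,\dots,n+m$ test), $f$ a fixed model, $\mathcal{L}(f,x,y)\in[0,1]$ a known risk map, $s:\mathcal{X}\to[0,1]$ a fixed score, and $L_i=\mathcal{L}(f,X_i,Y_i)$. Then for any fixed $\gamma>0$ and every $j\in\{1,\dots,m\}$, the random variable $E_{\gamma,n+j}$ defined below satisfies $E_{\gamma,n+j}\ge0$ and $\mathbb{E}[L_{n+j}E_{\gamma,n+j}]\le1$.
   Context: Let $\mathcal{M}=\{s(X_i)\}_{i=1}^{n+m}$. For $t\in\mathbb{R}$ and $\ell\in[0,1]$ define $$\mathrm{FR}_{n+j}(t;\ell)=\frac{\ell\mathbf{1}\{s(X_{n+j})\le t\}+\sum_{i=1}^nL_i\mathbf{1}\{s(X_i)\le t\}}{1+\sum_{k\ne j,k\le m}\mathbf{1}\{s(X_{n+k})\le t\}}\cdot\frac{m}{n+1},$$ $t_{\gamma,n+j}(\ell)=\max\{t\in\mathcal{M}:\mathrm{FR}_{n+j}(t;\ell)\le\gamma\}$ (with $\max\emptyset=-\infty$), and $$E_{\gamma,n+j}=\inf_{\ell\in[0,1]}\frac{(n+1)\mathbf{1}\{s(X_{n+j})\le t_{\gamma,n+j}(\ell)\}}{\ell\mathbf{1}\{s(X_{n+j})\le t_{\gamma,n+j}(\ell)\}+\sum_{i=1}^nL_i\mathbf{1}\{s(X_i)\le t_{\gamma,n+j}(\ell)\}},$$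 each ratio being $0$ when its numerator is $0$ and $+\infty$ when the numerator is positive and denominator $0$; and $E_{\gamma,n+j}=0$ if $\inf_{\ell}t_{\gamma,n+j}(\ell)=-\infty$. *)

(* Defs.v *)
From HB Require Import structures.
From mathcomp Require Import all_boot all_order all_algebra.
From mathcomp Require Import all_classical all_reals all_analysis.
Set Implicit Arguments. Unset Strict Implicit. Unset Printing Implicit Defensive.
Import Order.TTheory GRing.Theory Num.Theory.
Local Open Scope ring_scope.
Local Open Scope classical_set_scope.

(* Exchangeability of a finite family of random elements Z_0..Z_(N-1) with
   values in a measurable space T: for every permutation sigma of the indices
   the joint law of (Z_(sigma i))_i equals that of (Z_i)_i; checked on the
   measurable rectangles prod_i A_i, which generate the product sigma-algebra
   of T^N (a pi-system), so this is equivalent to equality of joint laws. *)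
Definition exchangeable {R : realType} {d dT : measure_display}
  {Omega : measurableType d} {T : measurableType dT} {N : nat}
  (P : probability Omega R) (Z : 'I_N -> Omega -> T) : Prop :=
  forall (sigma : 'I_N -> 'I_N), bijective sigma ->
  forall (A : 'I_N -> set T), (forall i, measurable (A i)) ->
    P [set w | forall i, A i (Z (sigma i) w)] = P [set w | forall i, A i (Z i w)].

Section Evalue.
Variables (R : realType) (n m : nat).
(* S k = s(X_(k+1)) for k : 'I_(n+m); Lc k = L_(k+1) (only calibration used).
   Calibration index i : 'I_n is lshift m i, test index j : 'I_m is rshift n j. *)
Variables (S Lc : 'I_(n + m) -> R) (gamma : R) (j : 'I_m).

Definition ind (b : bool) : R := if b then 1 else 0.

Definition FR (t l : R) : R :=
  (l * ind (S (rshift n j) <= t)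
     + \sum_(i < n) Lc (lshift m i) * ind (S (lshift m i) <= t))
  / (1 + \sum_(k < m | k != j) ind (S (rshift n k) <= t))
  * (m%:R / (n + 1)%:R).

Definition tgam (l : R) : \bar R :=
  \big[Order.max/-oo%E]_(k < n + m | FR (S k) l <= gamma) (S k)%:E.

(* the ratio inside the infimum, with conventions 0/.. = 0, pos/0 = +oo *)
Definition Eratio (l : R) : \bar R :=
  let t := tgam l in
  if ((S (rshift n j))%:E <= t)%E then
    let den := l * 1 + \sum_(i < n) Lc (lshift m i) * ind ((S (lshift m i))%:E <= t)%E in
    if den == 0 then +oo%E else (((n + 1)%:R * 1) / den)%:E
  else 0%E.

Definition Egam : \bar R :=
  if ereal_inf [set tgam l | l in `[0, 1]] == -oo%E then 0%E
  else ereal_inf [set Eratio l | l in `[0, 1]].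

End Evalue.

(* Main.v *)
Require Import Defs.
From HB Require Import structures.
From mathcomp Require Import all_boot all_order all_algebra all_fingroup.
From mathcomp Require Import all_classical all_reals all_analysis.
Import Order.TTheory GRing.Theory Num.Theory.
Local Open Scope ring_scope.
Local Open Scope classical_set_scope.

Section Alg.
Variables (R : realType) (n m : nat) (j : 'I_m) (gamma : R).
Local Notation N := (n + m)%N.
Local Notation p := (rshift n j).

Definition inQ (k : 'I_N) : bool := (k == p) || (k < n)%N.

Lemma inQ_l i : inQ (lshift m i). Proof. by rewrite /inQ /= ltn_ord orbT. Qed.
Lemma inQ_r i : inQ (rshift n i) = (i == j).
Proof.
rewrite /inQ (inj_eq (@rshift_inj n m)) /=.
by rewrite ltnNge leq_addr orbF.
Qed.

Lemma sumQ (F : 'I_N -> R) :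
  \sum_(k < N | inQ k) F k = F p + \sum_(i < n) F (lshift m i).
Proof.
rewrite big_mkcond big_split_ord /= addrC; congr (_ + _); last first.
  by apply: eq_bigr => i _; rewrite inQ_l.
rewrite (eq_bigr (fun i => if i == j then F (rshift n i) else 0)); last first.
  by move=> i _; rewrite inQ_r.
by rewrite -big_mkcond /= big_pred1_eq.
Qed.

Lemma sumO (F : 'I_N -> R) :
  \sum_(k < N | ~~ inQ k) F k = \sum_(k < m | k != j) F (rshift n k).
Proof.
rewrite big_mkcond big_split_ord /=.
rewrite big1 ?add0r; last by move=> i _; rewrite inQ_l.
by rewrite [RHS]big_mkcond; apply: eq_bigr => i _; rewrite inQ_r.
Qed.

Definition cst_c : R := m%:R / (n + 1)%:R.

Lemma FR_canon (a b : 'I_N -> R) t :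
  FR a b j t (b p) =
  (\sum_(k < N | inQ k) b k * ind R (a k <= t)) /
  (1 + \sum_(k < N | ~~ inQ k) ind R (a k <= t)) * cst_c.
Proof. by rewrite /FR sumQ sumO. Qed.

Definition acc (a b : 'I_N -> R) (q : 'I_N) : bool :=
  [exists k : 'I_N, (FR a b j (a k) (b p) <= gamma) && (a q <= a k)].

Definition Dn (a b : 'I_N -> R) : R :=
  \sum_(k < N | inQ k) b k * ind R (acc a b k).

Definition hq (a b : 'I_N -> R) (q : 'I_N) : R :=
  b q * ind R (acc a b q) / Dn a b.

Section Perm.
Variable sg : 'I_N -> 'I_N.
Hypothesis sgK : involutive sg.
Hypothesis sgQ : forall k, inQ (sg k) = inQ k.

Lemma sum_perm (F : 'I_N -> R) (Pr : pred 'I_N) :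
  (forall k, Pr (sg k) = Pr k) ->
  \sum_(k < N | Pr k) F (sg k) = \sum_(k < N | Pr k) F k.
Proof.
move=> HP; rewrite (reindex_inj (inv_inj sgK)) /=.
by apply: eq_big => k; rewrite ?HP ?sgK.
Qed.

Lemma FR_perm (a b : 'I_N -> R) t :
  FR (a \o sg) (b \o sg) j t ((b \o sg) p) = FR a b j t (b p).
Proof.
rewrite !FR_canon /=.
rewrite (sum_perm (fun k => b k * ind R (a k <= t)) inQ) //.
rewrite (sum_perm (fun k => ind R (a k <= t)) (fun k => ~~ inQ k)) //.
by move=> k; rewrite sgQ.
Qed.

Lemma acc_perm (a b : 'I_N -> R) q :
  acc (a \o sg) (b \o sg) q = acc a b (sg q).
Proof.
rewrite /acc; apply/existsP/existsP => -[k Hk].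
  by exists (sg k); move: Hk; rewrite FR_perm.
by exists (sg k); rewrite FR_perm /= sgK.
Qed.

Lemma Dn_perm (a b : 'I_N -> R) : Dn (a \o sg) (b \o sg) = Dn a b.
Proof.
rewrite /Dn; under eq_bigr do rewrite acc_perm.
exact: (sum_perm (fun k => b k * ind R (acc a b k)) inQ).
Qed.

Lemma hq_perm (a b : 'I_N -> R) q : hq (a \o sg) (b \o sg) q = hq a b (sg q).
Proof. by rewrite /hq Dn_perm acc_perm. Qed.

End Perm.

Lemma hq_ge0 (a b : 'I_N -> R) q : (forall k, 0 <= b k) -> 0 <= hq a b q.
Proof.
move=> b0; rewrite /hq; apply: divr_ge0.
  by apply: mulr_ge0 => //; rewrite /ind; case: ifP.
by rewrite /Dn; apply: sumr_ge0 => k _; apply: mulr_ge0 => //; rewrite /ind; case: ifP.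
Qed.

Lemma sum_hq (a b : 'I_N -> R) :
  \sum_(k < N | inQ k) hq a b k <= 1.
Proof.
rewrite /hq -mulr_suml -/(Dn a b).
have [->|D0] := eqVneq (Dn a b) 0; first by rewrite invr0 mulr0.
by rewrite mulfV.
Qed.

End Alg.
Arguments acc {R n m} j gamma a b q.
Arguments Dn {R n m} j gamma a b.
Arguments hq {R n m} j gamma a b q.
Arguments sumQ {R n m} j F.
Arguments sumO {R n m} j F.
Arguments FR_canon {R n m} j a b t.
Arguments hq_perm {R n m} j gamma sg _ _ a b q.
Arguments hq_ge0 {R n m} j gamma a b q _.
Arguments sum_hq {R n m} j gamma a b.


Section B.
Variables (R : realType) (n m : nat) (j : 'I_m) (gamma : R).
Local Notation N := (n + m)%N.
Local Notation p := (rshift n j).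
Variables (S Lc : 'I_N -> R).
Hypothesis Lc01 : forall k, 0 <= Lc k <= 1.

Lemma ind01 b : 0 <= ind R b. Proof. by rewrite /ind; case: b. Qed.

Lemma tgam_ge x l : ((x%:E <= tgam S Lc gamma j l)%E) =
  [exists k, (FR S Lc j (S k) l <= gamma) && (x <= S k)].
Proof.
apply/idP/existsP.
  rewrite /tgam; elim/big_rec: _ => [|i y Pi IH].
    by rewrite leeNy_eq.
  rewrite le_max => /orP[|/IH//].
  by rewrite lee_fin => H; exists i; rewrite Pi H.
case=> k /andP[Pk xk]; apply: (le_trans _ (le_bigmax_cond _ _ Pk)).
by rewrite lee_fin.
Qed.

Lemma acc_tgam q : acc j gamma S Lc q =
  ((S q)%:E <= tgam S Lc gamma j (Lc p))%E.
Proof. by rewrite tgam_ge. Qed.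

Lemma Eratio_ge0 l : 0 <= l -> (0 <= Eratio S Lc gamma j l)%E.
Proof.
move=> l0; rewrite /Eratio; case: ifP => // _; case: ifP => // _.
rewrite lee_fin; apply: divr_ge0; first by rewrite mulr1.
rewrite mulr1; apply: addr_ge0 => //; apply: sumr_ge0 => i _.
apply: mulr_ge0; [by case/andP: (Lc01 (lshift m i))|exact: ind01].
Qed.

Lemma Eratio_p :
  ((Lc p)%:E * Eratio S Lc gamma j (Lc p) = ((n + 1)%:R * hq j gamma S Lc p)%:E)%E.
Proof.
rewrite /Eratio /hq /Dn sumQ -acc_tgam.
have Hs : \sum_(i < n) Lc (lshift m i) * ind R ((S (lshift m i))%:E <= tgam S Lc gamma j (Lc p))%E
   = \sum_(i < n) Lc (lshift m i) * ind R (acc j gamma S Lc (lshift m i)).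
  by apply: eq_bigr => i _; rewrite acc_tgam.
rewrite Hs; case: (acc j gamma S Lc p); last first.
  by rewrite mule0 /ind !mulr0 !mul0r mulr0.
rewrite /ind [in X in if X then _ else _]mulr1; case: eqP => [D0|D0].
  have Lp0 : Lc p = 0.
    apply/eqP; rewrite eq_le; case/andP: (Lc01 p) => -> _; rewrite andbT.
    rewrite -D0 lerDl; apply: sumr_ge0 => i _; apply: mulr_ge0; last exact: ind01.
    by case/andP: (Lc01 (lshift m i)).
  by rewrite Lp0 mul0e !mul0r mulr0.
rewrite -EFinM; congr (_%:E); rewrite !mulr1 /=.
by rewrite mulrCA mulrA.
Qed.

Lemma E_bound :
  (0 <= Egam S Lc gamma j)%E /\
  ((Lc p)%:E * Egam S Lc gamma j <= ((n + 1)%:R * hq j gamma S Lc p)%:E)%E.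
Proof.
have H0 : (0 <= ((n + 1)%:R * hq j gamma S Lc p)%:E)%E.
  rewrite lee_fin mulr_ge0 // hq_ge0 // => k; by case/andP: (Lc01 k).
rewrite /Egam; case: ifP => _; first by rewrite mule0.
split.
  by apply/ereal_infP => _ [l /= /andP[l0 _] <-]; apply: Eratio_ge0.
rewrite -Eratio_p; apply: lee_wpmul2l; first by rewrite lee_fin; case/andP: (Lc01 p).
apply: ereal_inf_lbound; exists (Lc p) => //.
by rewrite /= in_itv /=; exact: Lc01.
Qed.

End B.
Arguments E_bound {R n m} j gamma S Lc Lc01.


Lemma measurable_inv (R : realType) : measurable_fun [set: R] (@GRing.inv R).
Proof.
have -> : [set: R] = [set 0] `|` ~` [set 0] by rewrite setUCr.
apply/measurable_funU => //; first exact: measurableC.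
split.
  move=> _ B mB; case: (pselect (B (0:R)^-1)) => B0.
    by rewrite (_ : _ `&` _ = [set 0]) //; apply/seteqP; split => [x [->]//|x -> ]; split.
  by rewrite (_ : _ `&` _ = set0) //; apply/seteqP; split => [x [-> /= ]//|x].
apply: measurable_realfun.open_continuous_measurable_fun.
  by apply: closed_openC; apply: accessible_closed_set1; apply: hausdorff_accessible; exact: Rhausdorff.
by move=> x; rewrite inE => /eqP x0; apply: inv_continuous.
Qed.

Section Meas.
Context {R : realType} {d : measure_display} {T : measurableType d}.

Lemma mind (B : T -> bool) : measurable_fun setT B ->
  measurable_fun setT (fun v => ind R (B v)).
Proof. by move=> mB; apply: measurable_fun_ifT. Qed.

Lemma mhas (I : Type) (Pr : T -> I -> bool) (r : seq I) :
  (forall k, measurable_fun setT (fun v => Pr v k)) ->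
  measurable_fun setT (fun v => has (Pr v) r).
Proof.
move=> mP; elim: r => [|x r IH] /=; first exact: measurable_cst.
exact: measurable_or.
Qed.

Lemma mexists (I : finType) (Pr : T -> I -> bool) :
  (forall k, measurable_fun setT (fun v => Pr v k)) ->
  measurable_fun setT (fun v => [exists k, Pr v k]).
Proof.
move=> mP; have -> : (fun v => [exists k, Pr v k]) = (fun v => has (Pr v) (enum I)).
  apply/funext => v; apply/existsP/hasP => [[k Hk]|[k _ Hk]]; last by exists k.
  by exists k => //; rewrite mem_enum.
exact: mhas.
Qed.

Lemma msum (I : Type) (r : seq I) (Pr : pred I) (F : I -> T -> R) :
  (forall k, measurable_fun setT (F k)) ->
  measurable_fun setT (fun v => \sum_(k <- r | Pr k) F k v).
Proof.
move=> mF; rewrite (_ : (fun v => _) = (fun v => \sum_(k <- r) (if Pr k then F k v else 0))).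
  by apply: measurable_sum => k; case: (Pr k) => //; exact: measurable_cst.
by apply/funext => v; rewrite big_mkcond.
Qed.

Lemma mmul (f g : T -> R) : measurable_fun setT f -> measurable_fun setT g ->
  measurable_fun setT (fun v => f v * g v).
Proof. exact: measurable_realfun.measurable_funM. Qed.

Lemma madd (f g : T -> R) : measurable_fun setT f -> measurable_fun setT g ->
  measurable_fun setT (fun v => f v + g v).
Proof. exact: measurable_realfun.measurable_funD. Qed.

Lemma mdiv (f g : T -> R) : measurable_fun setT f -> measurable_fun setT g ->
  measurable_fun setT (fun v => f v / g v).
Proof.
move=> mf mg; apply: mmul => //.
exact: (measurableT_comp (measurable_inv R) mg).
Qed.

Lemma mle (f g : T -> R) : measurable_fun setT f -> measurable_fun setT g ->
  measurable_fun setT (fun v => f v <= g v).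
Proof. exact: measurable_realfun.measurable_fun_ler. Qed.

End Meas.

Section MeasH.
Context {R : realType} {d : measure_display} {T : measurableType d}.
Variables (n m : nat) (j : 'I_m) (gamma : R).
Local Notation N := (n + m)%N.
Variables (A B : T -> 'I_N -> R).
Hypothesis mA : forall k, measurable_fun setT (fun v => A v k).
Hypothesis mB : forall k, measurable_fun setT (fun v => B v k).

Lemma mcst (c : R) : measurable_fun [set: T] (fun _ => c).
Proof. exact: measurable_cst. Qed.

Lemma mFR (t l : T -> R) : measurable_fun setT t -> measurable_fun setT l ->
  measurable_fun setT (fun v => FR (A v) (B v) j (t v) (l v)).
Proof.
move=> mt ml; rewrite /FR.
apply: mmul; last exact: mcst.
apply: mdiv.
  apply: madd; first by apply: mmul => //; apply: mind; exact: mle.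
  by apply: msum => k; apply: mmul => //; apply: mind; exact: mle.
apply: madd; first exact: mcst.
by apply: msum => k; apply: mind; exact: mle.
Qed.

Lemma macc q : measurable_fun setT (fun v => acc j gamma (A v) (B v) q).
Proof.
apply: mexists => k; apply: measurable_and.
  by apply: mle; [apply: mFR|exact: mcst].
exact: mle.
Qed.

Lemma mhq q : measurable_fun setT (fun v => hq j gamma (A v) (B v) q).
Proof.
rewrite /hq; apply: mdiv.
  by apply: mmul => //; apply: mind; exact: macc.
by apply: msum => k; apply: mmul => //; apply: mind; exact: macc.
Qed.

End MeasH.


Section Exch.
Context {R : realType} {d dT : measure_display} {Omega : measurableType d}
  {T : measurableType dT} {N : nat}.
Variables (P : probability Omega R) (Z : 'I_N -> Omega -> T).
Hypothesis mZ : forall i, measurable_fun setT (Z i).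
Hypothesis hex : exchangeable P Z.

Definition Vt (sg : 'I_N -> 'I_N) (w : Omega) : N.-tuple T := [tuple Z (sg i) w | i < N].

Lemma mVt sg : measurable_fun setT (Vt sg).
Proof.
apply/measurable_fun_tnthP => i.
rewrite (_ : _ \o _ = Z (sg i)); first exact: mZ.
by apply/funext => w /=; rewrite tnth_mktuple.
Qed.

Definition rect : set (set (N.-tuple T)) :=
  [set B | exists A : 'I_N -> set T, (forall i, measurable (A i)) /\
     B = [set v | forall i, A i (tnth v i)]].

Lemma rect_measurable : rect `<=` measurable.
Proof.
move=> _ [A [mA ->]].
rewrite (_ : [set v | _] = \big[setI/setT]_(i <- enum 'I_N) ((@tnth N T ^~ i) @^-1` A i)).
  apply: bigsetI_measurable => i _.
  by rewrite -[X in measurable X]setTI; apply: measurable_tnth.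
apply/seteqP; split => v.
  move=> Hv; elim: (enum 'I_N) => [|x r IH]; first by rewrite big_nil.
  by rewrite big_cons; split.
move=> Hv i.
have : i \in enum 'I_N by rewrite mem_enum.
elim: (enum 'I_N) Hv => [|x r IH] //; rewrite big_cons => -[Hx Hr].
by rewrite in_cons => /orP[/eqP ->//|/IH]; apply.
Qed.

Lemma measurable_rect : measurable = <<s rect >>.
Proof.
apply/seteqP; split; last first.
  apply: smallest_sub; first exact: sigma_algebra_measurable.
  exact: rect_measurable.
move=> B mB.
have H : <<s \big[setU/set0]_(i < N) preimage_set_system setT (fun x : N.-tuple T => tnth x i) measurable >> `<=` <<s rect >>.
  apply: smallest_sub; first exact: smallest_sigma_algebra.
  rewrite -bigcup_seq => _ [i _ [A mA <-]].
  apply: sub_sigma_algebra; exists (fun k => if k == i then A else setT); split.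
    by move=> k; case: ifP.
  apply/seteqP; split => v /=.
    by move=> Av k; case: eqP => [->|]; [case: Av|].
  by move=> Hv; split => //; have := Hv i; rewrite eqxx.
exact: H.
Qed.

Lemma rect_setI : setI_closed rect.
Proof.
move=> _ _ [A [mA ->]] [B [mB ->]]; exists (fun i => A i `&` B i); split.
  by move=> i; exact: measurableI.
by apply/seteqP; split => v /=; [move=> [HA HB] i; split|move=> H; split => i; case: (H i)].
Qed.

Lemma push_eq sg : bijective sg -> forall B, measurable B ->
  pushforward P (Vt sg) B = pushforward P (Vt id) B.
Proof.
move=> bsg B mB.
have GT : rect setT.
  exists (fun=> setT); split => //; by apply/seteqP; split.
have cov : \bigcup_(k : nat) (fun=> [set: N.-tuple T]) k = setT by rewrite bigcup_const.
have ms := mVt sg; have mi := mVt id.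
apply: (measure_unique rect (fun=> setT) measurable_rect rect_setI (fun=> GT) cov) => //.
- move=> _ [A [mA ->]].
  change (P (Vt sg @^-1` [set v | forall i, A i (tnth v i)]) = P (Vt id @^-1` [set v | forall i, A i (tnth v i)])).
  have -> : Vt sg @^-1` [set v | forall i, A i (tnth v i)] = [set w | forall i, A i (Z (sg i) w)].
    by apply/seteqP; split => w /= H i; move: (H i); rewrite /Vt tnth_mktuple.
  have -> : Vt id @^-1` [set v | forall i, A i (tnth v i)] = [set w | forall i, A i (Z i w)].
    by apply/seteqP; split => w /= H i; move: (H i); rewrite /Vt tnth_mktuple.
  exact: hex.
- move=> _; change (P (Vt sg @^-1` setT) < +oo)%E.
  by rewrite preimage_setT probability_setT ltry.
Qed.

End Exch.


Lemma le_int_nomeas {d} {T : measurableType d} {R : realType} (mu : {measure set T -> \bar R})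
  (f g : T -> \bar R) : (forall x, (0 <= f x)%E) -> (forall x, (f x <= g x)%E) ->
  (\int[mu]_x f x <= \int[mu]_x g x)%E.
Proof.
move=> f0 fg; rewrite !ge0_integralTE //; last by move=> x; exact: le_trans (f0 x) (fg x).
apply: le_ereal_sup => _ [h /= Hh <-]; exists h => //= x; exact: le_trans (Hh x) (fg x).
Qed.

Section Exch2.
Context {R : realType} {d dT : measure_display} {Omega : measurableType d}
  {T : measurableType dT} {N : nat}.
Variables (P : probability Omega R) (Z : 'I_N -> Omega -> T).
Hypothesis mZ : forall i, measurable_fun setT (Z i).
Hypothesis hex : exchangeable P Z.

Lemma exch_int sg (bsg : bijective sg) (phi : N.-tuple T -> R) :
  measurable_fun setT phi -> (forall v, 0 <= phi v) ->
  (\int[P]_w (phi (Vt Z sg w))%:E = \int[P]_w (phi (Vt Z id w))%:E)%E.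
Proof.
move=> mphi phi0.
have E s : (\int[P]_w (phi (Vt Z s w))%:E =
    \int[P]_(w in Vt Z s @^-1` setT) ((EFin \o phi) \o Vt Z s) w)%E.
  by rewrite preimage_setT.
rewrite E [RHS]E.
rewrite -(ge0_integral_pushforward (mVt Z mZ sg)) //; last 2 first.
  exact/measurable_realfun.measurable_EFinP. by move=> v _; rewrite lee_fin.
rewrite -(ge0_integral_pushforward (mVt Z mZ id)) //; last 2 first.
  exact/measurable_realfun.measurable_EFinP. by move=> v _; rewrite lee_fin.
apply: eq_measure_integral; [exact: (mVt Z mZ)|exact: (mVt Z mZ)|move=> ? ? B mB _].
change (pushforward P (Vt Z sg) B = pushforward P (Vt Z id) B).
exact: (push_eq P Z mZ hex sg bsg).
Qed.
End Exch2.


Lemma int_split {d} {T : measurableType d} {R : realType} (mu : {measure set T -> \bar R})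
  (k : nat) (G0 : T -> R) (G : 'I_k -> T -> R) :
  measurable_fun setT G0 -> (forall i, measurable_fun setT (G i)) ->
  (forall x, 0 <= G0 x) -> (forall i x, 0 <= G i x) ->
  (\int[mu]_x ((G0 x)%:E + (\sum_(i < k) G i x)%:E) =
   \int[mu]_x (G0 x)%:E + \sum_(i < k) \int[mu]_x (G i x)%:E)%E.
Proof.
move=> m0 mG G00 Gp.
rewrite ge0_integralD //; last 4 first.
- by move=> x _; rewrite lee_fin.
- exact/measurable_realfun.measurable_EFinP.
- by move=> x _; rewrite lee_fin; apply: sumr_ge0.
- apply/measurable_realfun.measurable_EFinP. by apply: measurable_sum.
congr (_ + _)%E.
rewrite -ge0_integral_sum //; last 2 first.
- by move=> i; exact/measurable_realfun.measurable_EFinP.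
- by move=> i x _; rewrite lee_fin.
by apply: eq_integral => x _; rewrite sumEFin.
Qed.

Theorem theorem5p1 (R : realType) (d dX dY : measure_display)
  (Omega : measurableType d) (P : probability Omega R)
  (X : measurableType dX) (Y : measurableType dY) (n m : nat)
  (Xs : 'I_(n + m) -> Omega -> X) (Ys : 'I_(n + m) -> Omega -> Y)
  (hmeas : forall i, measurable_fun setT (fun w => (Xs i w, Ys i w)))
  (hexch : exchangeable P (fun i w => (Xs i w, Ys i w)))
  (F : Type) (f : F) (loss : F -> X -> Y -> R)
  (hloss01 : forall x y, 0 <= loss f x y <= 1)
  (hlossm : measurable_fun setT (fun xy : X * Y => loss f xy.1 xy.2))
  (s : X -> R) (hs01 : forall x, 0 <= s x <= 1) (hsm : measurable_fun setT s)
  (gamma : R) (hgamma : 0 < gamma) (j : 'I_m) :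
  let L := fun (i : 'I_(n + m)) (w : Omega) => loss f (Xs i w) (Ys i w) in
  let E := fun w => Egam (fun k => s (Xs k w)) (fun k => L k w) gamma j in
  (forall w, (0 <= E w)%E) /\
  (\int[P]_w ((L (rshift n j) w)%:E * E w) <= 1)%E.
Proof.
move=> L E.
have L01 w : forall k, 0 <= L k w <= 1 by move=> k; exact: hloss01.
split; first by move=> w; exact: (E_bound j gamma (fun k => s (Xs k w)) (fun k => L k w) (L01 w)).1.
pose Z := fun i w => (Xs i w, Ys i w).
pose Aof := fun (v : (n + m).-tuple (X * Y)%type) k => s (tnth v k).1.
pose Bof := fun (v : (n + m).-tuple (X * Y)%type) k => loss f (tnth v k).1 (tnth v k).2.
pose H := fun q v => hq j gamma (Aof v) (Bof v) q.
have mA k : measurable_fun setT (fun v => Aof v k).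
  exact: measurableT_comp hsm (measurableT_comp measurable_fst (measurable_tnth k)).
have mB k : measurable_fun setT (fun v => Bof v k).
  exact: measurableT_comp hlossm (measurable_tnth k).
have mH q : measurable_fun setT (H q) by exact: (mhq n m j gamma Aof Bof mA mB).
have B0 v k : 0 <= Bof v k by case/andP: (hloss01 (tnth v k).1 (tnth v k).2).
have H0 q v : 0 <= H q v by apply: hq_ge0.
pose V := Vt Z id.
have mHV q : measurable_fun setT (fun w => H q (V w)).
  exact: measurableT_comp (mH q) (mVt Z hmeas id).
have HV q w : H q (V w) = hq j gamma (fun k => s (Xs k w)) (fun k => L k w) q.
  by rewrite /H /Aof /Bof /V /Vt; congr hq; apply/funext => k; rewrite tnth_mktuple.
pose p := rshift n j.
apply: (@le_trans _ _ (\int[P]_w ((H p (V w))%:E + (\sum_(i < n) H p (V w))%:E))%E).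
  apply: le_int_nomeas.
    move=> w; apply: mule_ge0; first by rewrite lee_fin; case/andP: (L01 w p).
    exact: (E_bound j gamma (fun k => s (Xs k w)) (fun k => L k w) (L01 w)).1.
  move=> w; have := (E_bound j gamma (fun k => s (Xs k w)) (fun k => L k w) (L01 w)).2.
  rewrite -HV => /le_trans; apply.
  by rewrite -EFinD lee_fin sumr_const card_ord natrD mulrDl mul1r mulr_natl addrC.

rewrite int_split //.
have Hex (i : 'I_n) : (\int[P]_w (H p (V w))%:E = \int[P]_w (H (lshift m i) (V w))%:E)%E.
  pose sg := tperm p (lshift m i).
  have sgK : involutive sg by exact: tpermK.
  have sgQ k : inQ n m j (sg k) = inQ n m j k.
    by rewrite /sg; case: tpermP => [->|->|//]; rewrite /inQ eqxx /= ?ltn_ord ?orbT.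
  rewrite -(exch_int P Z hmeas hexch sg (inv_bij sgK) (H p) (mH p) (H0 p)).
  apply: eq_integral => w _; congr (_%:E).
  rewrite /H.
  have -> : Aof (Vt Z sg w) = Aof (V w) \o sg.
    by apply/funext => k; rewrite /Aof /V /Vt /= !tnth_mktuple.
  have -> : Bof (Vt Z sg w) = Bof (V w) \o sg.
    by apply/funext => k; rewrite /Bof /V /Vt /= !tnth_mktuple.
  by rewrite (hq_perm j gamma sg sgK sgQ) /sg tpermL.
rewrite (eq_bigr _ (fun i _ => Hex i)) -int_split //.
apply: (@le_trans _ _ (\int[P]_w (cst 1%E) w)%E); last first.
  by rewrite integral_cst // mul1e; apply: probability_le1.
apply: le_int_nomeas.
- by move=> w; rewrite adde_ge0 // lee_fin // sumr_ge0.
- move=> w; rewrite -EFinD lee_fin.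
  have := sum_hq j gamma (Aof (V w)) (Bof (V w)).
  by rewrite (sumQ j (fun k => hq j gamma (Aof (V w)) (Bof (V w)) k)).
Qed.
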